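(* Let $\Omega\subset\mathbb{R}^d$ be compact with a probability measure $\mu$, let $1\le p<\infty$, let $X_N$ be an $N$-dimensional subspace of $\mathcal{C}(\Omega)$, let $\xi=(\xi^1,\dots,\xi^m)\in\Omega^m$ and let $\mathbf{w}=(w_1,\dots,w_m)$ with $w_j>0$. Suppose that (A1) $C_1\|u\|_{L_p(\Omega,\mu)}\le\|S(u,\xi)\|_{p,\mathbf{w}}$ for all $u\in X_N$, and (A2) $\sum_{\nu=1}^mw_\nu\le C_2$, for some constants $C_1,C_2>0$. Then for any $f\in\mathcal{C}(\Omega)$, $$\|f-\ell p\mathbf{w}(\xi,X_N)(f)\|_{L_p(\Omega,\mu)}\le 2^{1/p}(2C_1^{-1}C_2^{1/p}+1)\,d(f,X_N)_{L_p(\Omega,\mu_{\mathbf{w},\xi})},$$ where $\mu_{\mathbf{w},\xi}=\frac12\mu+\frac1{2\|\mathbf{w}\|_1}\sum_{j=1}^mw_j\delta_{\xi^j}$ and $\|\mathbf{w}\|_1=\sum_{j=1}^mw_j$.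
   Context: $\|S(f,\xi)\|_{p,\mathbf{w}}:=(\sum_{\nu=1}^mw_\nu|f(\xi^\nu)|^p)^{1/p}$. The weighted least squares operator $\ell p\mathbf{w}(\xi,X_N)(f)$ denotes an element $u\in X_N$ minimizing $\|S(f-u,\xi)\|_{p,\mathbf{w}}$. For a probability measure $\nu$, $d(f,X_N)_{L_p(\Omega,\nu)}=\inf_{u\in X_N}\|f-u\|_{L_p(\Omega,\nu)}$. $\delta_x$ is the Dirac measure at $x$. *)

(* Defs.v *)
From HB Require Import structures.
From mathcomp Require Import all_boot all_order all_algebra.
From mathcomp Require Import all_classical all_reals all_analysis.
Set Implicit Arguments. Unset Strict Implicit. Unset Printing Implicit Defensive.
Import Order.TTheory GRing.Theory Num.Theory.
Import numFieldNormedType.Exports.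
Local Open Scope classical_set_scope.
Local Open Scope ring_scope.

(* R^d is modelled as row vectors 'rV[R]_d with their usual (normed) topology.
   borelRd R d is the same carrier equipped with the Borel sigma-algebra,
   i.e. the sigma-algebra generated by the open sets of 'rV[R]_d. *)
Definition borelRd (R : realType) (d : nat) :=
  g_sigma_algebraType (@open 'rV[R]_d).

Definition LpnormOn (R : realType) (d : nat) (nu : set (borelRd R d) -> \bar R)
    (Omega : set 'rV[R]_d) (p : R) (g : 'rV[R]_d -> R) : \bar R :=
  poweR (\int[nu]_(x in (Omega : set (borelRd R d))) ((`|g x| `^ p)%:E)) p^-1.

Definition Snorm (R : realType) (d m : nat) (w : 'I_m -> R)
    (xi : 'I_m -> 'rV[R]_d) (p : R) (g : 'rV[R]_d -> R) : R :=
  (\sum_(j < m) w j * `|g (xi j)| `^ p) `^ p^-1.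

Definition mu_wxi (R : realType) (d m : nat)
    (mu : set (borelRd R d) -> \bar R) (w : 'I_m -> R) (xi : 'I_m -> 'rV[R]_d)
    : set (borelRd R d) -> \bar R :=
  fun A => ((2^-1)%:E * mu A
    + \sum_(j < m) ((w j / (2 * \sum_(i < m) w i))%:E
                      * @dirac _ (borelRd R d) (xi j) R A))%E.

(* The subspace X_N of C(Omega) spanned by phi_1, ..., phi_N (a basis, see the
   theorem's hypotheses); an element of C(Omega) is identified with any function
   on R^d having the right values on Omega. *)
Definition inSpanOn (R : realType) (d N : nat) (Omega : set 'rV[R]_d)
    (phi : 'I_N -> 'rV[R]_d -> R) (u : 'rV[R]_d -> R) : Prop :=
  exists c : 'I_N -> R, forall x, Omega x -> u x = \sum_(i < N) c i * phi i x.

Definition lin_indep_on (R : realType) (d N : nat) (Omega : set 'rV[R]_d)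
    (phi : 'I_N -> 'rV[R]_d -> R) : Prop :=
  forall c : 'I_N -> R,
    (forall x, Omega x -> \sum_(i < N) c i * phi i x = 0) -> forall i, c i = 0.

Definition distLp (R : realType) (d N : nat) (nu : set (borelRd R d) -> \bar R)
    (Omega : set 'rV[R]_d) (p : R) (phi : 'I_N -> 'rV[R]_d -> R)
    (f : 'rV[R]_d -> R) : \bar R :=
  ereal_inf [set LpnormOn nu Omega p (f \- u) | u in inSpanOn Omega phi].

(* Main.v *)
Require Import Defs.
From HB Require Import structures.
From mathcomp Require Import all_boot all_order all_algebra.
From mathcomp Require Import all_classical all_reals all_analysis.
From mathcomp Require Import measurable_realfun.
From mathcomp Require Import ring lra.
Import Order.TTheory GRing.Theory Num.Theory.
Import numFieldNormedType.Exports.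
Local Open Scope classical_set_scope.
Local Open Scope ring_scope.

Section S.
Variables (R : realType) (d : nat).
Lemma open_meas (V : set 'rV[R]_d) : open V -> measurable (V : set (borelRd R d)).
Proof. by move=> oV; apply: sub_sigma_algebra. Qed.

Lemma closed_meas (V : set 'rV[R]_d) : closed V -> measurable (V : set (borelRd R d)).
Proof.
move=> cV; rewrite -(setCK V); apply: measurableC; apply: open_meas.
exact: closed_openC.
Qed.

Lemma cont_meas (Omega : set 'rV[R]_d) (h : 'rV[R]_d -> R) :
  closed Omega -> {within Omega, continuous h} ->
  measurable_fun (setT : set (borelRd R d)) (h \_ Omega).
Proof.
move=> cO ch.
have mO := closed_meas Omega cO.
apply/(measurable_restrictT _ mO).
apply: (measurability _ (measurable_realfun.RGenOpens.measurableE R)).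
move=> _ [_ [a [b ->]] <-].
have : open ((h : subspace Omega -> R) @^-1` `]a, b[) .
  by move/continuousP: ch; apply; exact: interval_open.
case/open_subspaceP => V oV VE.
rewrite setIC -VE; apply: measurableI => //; exact: open_meas V oV.
Qed.
Local Open Scope ereal_scope.

Definition dmeas (m : nat) (xi : 'I_m -> 'rV[R]_d) (c : 'I_m -> {nonneg R}) :
   measure (borelRd R d) R :=
  msum (fun n => match @insub _ (fun k => (k < m)%N) 'I_m n with
                 | Some j => mscale (c j) (@dirac _ (borelRd R d) (xi j) R)
                 | None => mzero end) m.

Arguments dmeas {m}.
Lemma dmeasE m xi c A : dmeas xi c A = \sum_(j < m) (c j)%:num%:E * @dirac _ (borelRd R d) (xi j) R A.
Proof.
rewrite /dmeas /msum; apply: eq_bigr => j _.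
by rewrite (valK j).
Qed.

Lemma int_dmeas m (xi : 'I_m -> 'rV[R]_d) (c : 'I_m -> {nonneg R}) F :
  measurable_fun (setT : set (borelRd R d)) (F : 'rV[R]_d -> \bar R) -> (forall x, 0 <= F x) ->
  \int[dmeas xi c]_x F x = \sum_(j < m) (c j)%:num%:E * F (xi j).
Proof.
move=> mF F0.
rewrite ge0_integral_measure_sum//; apply: eq_bigr => j _.
rewrite (valK j) ge0_integral_mscale//.
by rewrite integral_dirac// diracT mul1e.
Qed.
Lemma Lp_patch (nu : measure (borelRd R d) R) (Omega : set 'rV[R]_d) (p : R)
  (g : 'rV[R]_d -> R) : (0 < p)%R ->
  LpnormOn nu Omega p g = Lnorm nu p%:E (EFin \o (g \_ Omega)).
Proof.
move=> p0; rewrite unlock /LpnormOn (integral_mkcond (Omega : set (borelRd R d))); congr (_ `^ _).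
apply: eq_integral => x _ /=; rewrite /patch; case: ifP => _ /=.
  by [].
change (0%E = (`|0 : R| `^ p)%:E).
by rewrite normr0 powR0 ?gt_eqF.
Qed.
Lemma meas_powG (Omega : set 'rV[R]_d) (p : R) (g : 'rV[R]_d -> R) :
  measurable_fun (setT : set (borelRd R d)) (g \_ Omega) ->
  measurable_fun (setT : set (borelRd R d))
     (fun x => `|(EFin \o (g \_ Omega)) x| `^ p).
Proof.
move=> mg.
apply/measurable_EFinP => /=.
apply: (measurableT_comp (measurable_powR p)).
exact: measurableT_comp.
Qed.

Lemma Snorm_dmeas m (xi : 'I_m -> 'rV[R]_d) (w : 'I_m -> R) (hw : forall j, (0 <= w j)%R)
  (Omega : set 'rV[R]_d) (p : R) (g : 'rV[R]_d -> R) :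
  (forall j, Omega (xi j)) ->
  measurable_fun (setT : set (borelRd R d)) (g \_ Omega) ->
  (Snorm w xi p g)%:E = Lnorm (dmeas xi (fun j => NngNum (hw j))) p%:E (EFin \o (g \_ Omega)).
Proof.
move=> xiO mg; rewrite unlock int_dmeas; last 2 first.
- exact: meas_powG.
- by move=> x; rewrite poweR_ge0.
rewrite /Snorm -poweR_EFin -sumEFin; congr (_ `^ _); apply: eq_bigr => j _ /=.
by rewrite /patch mem_set.
Qed.
Lemma half_ge0 : (0 <= (2^-1 : R))%R. Proof. by rewrite invr_ge0. Qed.
Definition half_nng : {nonneg R} := NngNum half_ge0.

Definition mwx (mu : measure (borelRd R d) R) m (xi : 'I_m -> 'rV[R]_d) (c : 'I_m -> R)
  (hc : forall j, (0 <= c j)%R) : measure (borelRd R d) R :=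
  measure_add (mscale half_nng mu) (dmeas xi (fun j => NngNum (hc j))).

Arguments mwx mu {m} xi {c} hc.
Lemma int_mwx (mu : measure (borelRd R d) R) m (xi : 'I_m -> 'rV[R]_d) (c : 'I_m -> R)
  (hc : forall j, (0 <= c j)%R) F :
  measurable_fun (setT : set (borelRd R d)) (F : 'rV[R]_d -> \bar R) -> (forall x, 0 <= F x) ->
  \int[mwx mu xi hc]_x F x = (2^-1)%:E * \int[mu]_x F x + \sum_(j < m) (c j)%:E * F (xi j).
Proof.
move=> mF F0; rewrite /mwx ge0_integral_measure_add//.
by rewrite ge0_integral_mscale// int_dmeas.
Qed.

Lemma mu_wxiE (mu : measure (borelRd R d) R) m (xi : 'I_m -> 'rV[R]_d) (w : 'I_m -> R)
  (hc : forall j, (0 <= w j / (2 * \sum_(i < m) w i))%R) :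
  mu_wxi mu w xi = mwx mu xi hc.
Proof.
apply/funext => A; rewrite /mu_wxi /mwx.
rewrite [RHS]measure_addE [in RHS]dmeasE.
reflexivity.

Qed.

Lemma combine (a b c X : \bar R) (s sw sw0 C1 k1 k2 : R) :
  (0 < C1)%R -> (0 <= k1)%R -> (0 <= k2)%R -> (0 <= X)%E -> (0 <= b)%E ->
  (a <= b + c)%E -> (C1%:E * c <= s%:E)%E -> (s <= sw + sw0)%R -> (sw0 <= sw)%R ->
  (b <= k1%:E * X)%E -> (sw%:E <= k2%:E * X)%E ->
  (a <= (k1 + 2 * C1^-1 * k2)%R%:E * X)%E.
Proof.
move=> C10 k10 k20 X0 b0 h1 h2 h3 h4 h5 h6.
have hc : (c <= ((2 * C1^-1) * sw)%R%:E)%E.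
  apply: (@le_trans _ _ (C1^-1 * s)%R%:E).
    by rewrite EFinM lee_pdivlMl.
  rewrite lee_fin.
  have ci : (0 < C1^-1)%R by rewrite invr_gt0.
  move: ci; set ci := (C1^-1)%R; move=> ci0.
  nra.
apply: (le_trans h1); apply: (le_trans (leeD h5 hc)).
have c0 : (0 <= 2 * C1^-1)%R by rewrite mulr_ge0 // invr_ge0 ltW.
rewrite EFinM.
apply: (le_trans (leeD (lexx _) (lee_wpmul2l (x := (2 * C1^-1)%R%:E) _ h6))).
  by rewrite lee_fin.
rewrite muleA -EFinM -ge0_muleDl ?lee_fin ?mulr_ge0 //.
by rewrite invr_ge0 ltW.
Qed.

Local Close Scope ereal_scope.
Lemma patchB (g h : 'rV[R]_d -> R) (Omega : set 'rV[R]_d) :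
  (g \- h) \_ Omega = (g \_ Omega) \- (h \_ Omega).
Proof.
apply/funext => x; rewrite /patch /=; case: ifPn => xO; rewrite ?xO ?(negbTE xO) //.
change ((0:R) = 0 - 0); by rewrite subr0.
Qed.

End S.

Theorem theorem2p1 (R : realType) (d : nat) (Omega : set 'rV[R]_d)
    (mu : probability (borelRd R d) R) (p : R) (N : nat)
    (phi : 'I_N -> 'rV[R]_d -> R) (m : nat) (xi : 'I_m -> 'rV[R]_d)
    (w : 'I_m -> R) (C1 C2 : R) :
  compact Omega ->
  mu (Omega : set (borelRd R d)) = 1%E ->
  1 <= p ->
  (forall i, {within Omega, continuous (phi i)}) ->
  lin_indep_on Omega phi ->
  (forall j, Omega (xi j)) ->
  (forall j, 0 < w j) ->
  0 < C1 -> 0 < C2 ->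
  (forall u, inSpanOn Omega phi u ->
     (C1%:E * LpnormOn mu Omega p u <= (Snorm w xi p u)%:E)%E) ->
  \sum_(j < m) w j <= C2 ->
  forall f : 'rV[R]_d -> R, {within Omega, continuous f} ->
  forall u0 : 'rV[R]_d -> R,
    inSpanOn Omega phi u0 ->
    (forall u, inSpanOn Omega phi u ->
       Snorm w xi p (f \- u0) <= Snorm w xi p (f \- u)) ->
    (LpnormOn mu Omega p (f \- u0)%R
       <= (2 `^ p^-1 * (2 * C1^-1 * C2 `^ p^-1 + 1))%:E
          * distLp (mu_wxi mu w xi) Omega p phi f)%E.
Proof.
move=> cO mO1 p1 phic indep xiO wpos C1pos C2pos A1 A2 f fc u0 u0s u0min.
have p0 : 0 < p by apply: (lt_le_trans ltr01 p1).
have clO : closed Omega := compact_closed (@norm_hausdorff _ _) cO.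
have mf := @cont_meas R d Omega f clO fc.
have span_meas : forall u, inSpanOn Omega phi u ->
    measurable_fun (setT : set (borelRd R d)) (u \_ Omega).
  move=> u [c hc].
  have -> : u \_ Omega = (fun x => \sum_(i < N) c i * (phi i \_ Omega) x).
    apply/funext => x; rewrite /patch; case: ifPn => xO; rewrite ?xO ?(negbTE xO).
      exact: hc (set_mem xO).
    by apply/esym; apply: big1 => i _; apply: mulr0.
  apply: measurable_sum => i; apply: measurable_funM.
    exact: measurable_cst.
  exact: (@cont_meas R d Omega (phi i) clO (phic i)).
have mB : forall g h : 'rV[R]_d -> R,
    measurable_fun (setT : set (borelRd R d)) (g \_ Omega) ->
    measurable_fun (setT : set (borelRd R d)) (h \_ Omega) ->
    measurable_fun (setT : set (borelRd R d)) ((g \- h) \_ Omega).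
  by move=> g h mg mh; rewrite patchB; exact: measurable_funB.
have spanB : forall u v, inSpanOn Omega phi u -> inSpanOn Omega phi v ->
    inSpanOn Omega phi (u \- v).
  move=> u v [a ha] [b hb]; exists (fun i => a i - b i) => x Ox /=.
  rewrite ha // hb // -sumrB; apply: eq_bigr => i _; ring.
set W := \sum_(i < m) w i.
have hw : forall j, 0 <= w j by move=> j; exact: ltW.
have W0 : 0 <= W by apply: sumr_ge0 => i _; exact: hw.
have hc : forall j, 0 <= w j / (2 * W).
  by move=> j; apply: divr_ge0; [exact: hw|rewrite mulr_ge0].
rewrite (@mu_wxiE R d mu m xi w hc).
set K := 2 `^ p^-1 * (2 * C1^-1 * C2 `^ p^-1 + 1).
have K0 : 0 < K.
  apply: mulr_gt0; first by rewrite powR_gt0.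
  have : 0 <= 2 * C1^-1 * C2 `^ p^-1.
    by rewrite !mulr_ge0 // ?invr_ge0 ?ltW // ?powR_ge0 // powR_gt0.
  lra.
suff key : forall u, inSpanOn Omega phi u ->
  (LpnormOn mu Omega p (f \- u0)%R <= K%:E * LpnormOn (@mwx R d mu m xi _ hc) Omega p (f \- u)%R)%E.
  rewrite muleC -lee_pdivrMr //; apply/ereal_infP => _ [u us <-].
  by rewrite lee_pdivrMr // muleC; exact: key.
move=> u us.
have mu_ := span_meas u us.
have mu0 := span_meas u0 u0s.
have mfu := mB f u mf mu_.
have mfu0 := mB f u0 mf mu0.
have muu0 := mB u u0 mu_ mu0.
have muf := mB u f mu_ mf.
pose dw := @dmeas R d m xi (fun j => NngNum (hw j)).
have SE : forall g, measurable_fun (setT : set (borelRd R d)) (g \_ Omega) ->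
    (Snorm w xi p g)%:E = Lnorm dw p%:E (EFin \o (g \_ Omega)).
  by move=> g mg; apply: (@Snorm_dmeas R d m xi w hw Omega p g xiO mg).
rewrite !(@Lp_patch R d) //.
have h1 : (Lnorm mu p%:E (EFin \o ((f \- u0)%R \_ Omega)) <=
     Lnorm mu p%:E (EFin \o ((f \- u)%R \_ Omega)) + Lnorm mu p%:E (EFin \o ((u \- u0)%R \_ Omega)))%E.
  have -> : (f \- u0) \_ Omega = ((f \- u) \_ Omega) \+ ((u \- u0) \_ Omega).
    by rewrite !patchB; apply/funext => x /=; rewrite addrA subrK.
  exact: minkowski_EFin.
have h2 := A1 _ (spanB u u0 us u0s).
rewrite (@Lp_patch R d) // in h2.
have hsym : Snorm w xi p (f \- u) = Snorm w xi p (u \- f).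
  rewrite /Snorm.
  have E : forall j, `|(f \- u) (xi j)| = `|(u \- f) (xi j)| by move=> j; exact: distrC.
  by under eq_bigr do rewrite E.
have h3 : Snorm w xi p (u \- u0) <= Snorm w xi p (u \- f) + Snorm w xi p (f \- u0).
  suff : ((Snorm w xi p (u \- u0))%:E <= (Snorm w xi p (u \- f))%:E + (Snorm w xi p (f \- u0))%:E)%E.
    by rewrite -EFinD lee_fin.
  have e1 := SE (u \- u0) muu0.
  have e2 := SE (u \- f) muf.
  have e3 := SE (f \- u0) mfu0.
  rewrite [X in (X <= _)%E]e1 [X in (_ <= X + _)%E]e2 [X in (_ <= _ + X)%E]e3.
  have -> : (u \- u0) \_ Omega = ((u \- f) \_ Omega) \+ ((f \- u0) \_ Omega).
    by rewrite !patchB; apply/funext => x /=; rewrite addrA subrK.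
  exact: minkowski_EFin.
have h4 := u0min u us.
rewrite -hsym in h3.
pose G := EFin \o ((f \- u)%R \_ Omega).
have mF := @meas_powG R d Omega p (f \- u) mfu.
have F0 : forall x, (0 <= `|G x| `^ p)%E by move=> x; exact: poweR_ge0.
have IX := @int_mwx R d mu m xi _ hc _ mF F0.
pose Imu := (\int[mu]_x (`|G x| `^ p))%E.
pose J := (\sum_(j < m) (w j / (2 * W))%:E * `|G (xi j)| `^ p)%E.
have Imu0 : (0 <= Imu)%E by apply: integral_ge0 => x _; exact: F0.
have J0 : (0 <= J)%E.
  by apply: sume_ge0 => j _; apply: mule_ge0; [rewrite lee_fin; exact: hc|exact: F0].
have XE : (Lnorm (@mwx R d mu m xi _ hc) p%:E G = ((2^-1)%:E * Imu + J) `^ p^-1)%E.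
  by rewrite unlock IX.
have bE : (Lnorm mu p%:E G = Imu `^ p^-1)%E by rewrite unlock.
have pi0 : 0 <= p^-1 by rewrite invr_ge0 ltW.
have h20 : (0 <= (2^-1 : R)%:E)%E by rewrite lee_fin invr_ge0.
have IJ0 : (0 <= (2^-1)%:E * Imu + J)%E by apply: adde_ge0; [exact: mule_ge0 h20 Imu0|exact: J0].
have h5 : (Lnorm mu p%:E G <= (2 `^ p^-1)%:E * Lnorm (@mwx R d mu m xi _ hc) p%:E G)%E.
  rewrite [X in (X <= _)%E]bE [X in (_ <= _ * X)%E]XE -[(2 `^ p^-1)%:E]poweR_EFin.
  rewrite -poweRM; last 2 first.
  - by rewrite lee_fin.
  - exact: IJ0.
  apply: gt0_ler_poweR.
  - exact: pi0.
  - by rewrite in_itv /= Imu0 leey.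
  - rewrite in_itv /= leey andbT; apply: mule_ge0; [by rewrite lee_fin|exact: IJ0].
  rewrite ge0_muleDr; last 2 first.
  - exact: mule_ge0.
  - exact: J0.
  rewrite muleA -EFinM mulfV; last by [].
  rewrite mul1e; apply: leeDl; apply: mule_ge0; [by rewrite lee_fin|exact: J0].
have JE : J = (\sum_(j < m) (w j / (2 * W)) * `|(f \- u) (xi j)| `^ p)%:E.
  rewrite /J -sumEFin; apply: eq_bigr => j _.
  rewrite EFinM /G /= /patch mem_set; last exact: xiO j.
  reflexivity.
have Wge : forall j, w j <= W.
  move=> j; rewrite /W (bigD1 j); last done.
  rewrite lerDl; apply: sumr_ge0 => i _; exact: hw.
have sumE : \sum_(j < m) w j * `|(f \- u) (xi j)| `^ p =
    2 * W * \sum_(j < m) (w j / (2 * W)) * `|(f \- u) (xi j)| `^ p.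
  rewrite mulr_sumr; apply: eq_bigr => j _.
  have W0' : 0 < W := lt_le_trans (wpos j) (Wge j).
  by field; rewrite gt_eqF.
have A2' : W <= C2 by exact: A2.
have ca0 : 0 <= \sum_(j < m) (w j / (2 * W)) * `|(f \- u) (xi j)| `^ p.
  by apply: sumr_ge0 => j _; apply: mulr_ge0; [exact: hc|exact: powR_ge0].
have h6 : ((Snorm w xi p (f \- u))%:E <=
    (2 `^ p^-1 * C2 `^ p^-1)%:E * Lnorm (@mwx R d mu m xi _ hc) p%:E G)%E.
  have sE : (Snorm w xi p (f \- u))%:E =
      ((\sum_(j < m) w j * `|(f \- u) (xi j)| `^ p)%:E `^ p^-1)%E.
    by rewrite poweR_EFin.
  have kE : (2 `^ p^-1 * C2 `^ p^-1)%:E = (((2 * C2)%:E) `^ p^-1)%E.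
    by rewrite poweR_EFin powRM; [|exact: ler0n|exact: ltW].
  rewrite [X in (X <= _)%E]sE [X in (_ <= X * _)%E]kE [X in (_ <= _ * X)%E]XE.
  rewrite -poweRM; last 2 first.
  - by rewrite lee_fin mulr_ge0; [|exact: ler0n|exact: ltW].
  - exact: IJ0.
  apply: gt0_ler_poweR.
  - exact: pi0.
  - rewrite in_itv /= leey andbT lee_fin sumE; apply: mulr_ge0; last exact: ca0.
    by apply: mulr_ge0; [exact: ler0n|exact: W0].
  - rewrite in_itv /= leey andbT; apply: mule_ge0; last exact: IJ0.
    by rewrite lee_fin mulr_ge0; [|exact: ler0n|exact: ltW].
  apply: (@le_trans _ _ ((2 * C2)%:E * J)%E).
    rewrite JE -EFinM lee_fin sumE; apply: ler_wpM2r; first exact: ca0.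
    by apply: ler_wpM2l; [exact: ler0n|exact: A2'].
  apply: lee_wpmul2l.
    by rewrite lee_fin mulr_ge0; [|exact: ler0n|exact: ltW].
  by apply: leeDr; exact: mule_ge0 h20 Imu0.
have X0 : (0 <= Lnorm (@mwx R d mu m xi _ hc) p%:E G)%E by exact: Lnorm_ge0.
have b0 : (0 <= Lnorm mu p%:E G)%E by exact: Lnorm_ge0.
have k10 : 0 <= 2 `^ p^-1 by exact: powR_ge0.
have k20 : 0 <= 2 `^ p^-1 * C2 `^ p^-1 by apply: mulr_ge0; exact: powR_ge0.
have -> : K = 2 `^ p^-1 + 2 * C1^-1 * (2 `^ p^-1 * C2 `^ p^-1) by rewrite /K; ring.
exact: (@combine R _ _ _ _ _ _ _ C1 _ _ C1pos k10 k20 X0 b0 h1 h2 h3 h4 h5 h6).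
Qed.
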